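(* Let $\mathcal H$ be a family of graphs. The following are equivalent: (i) there is a constant $c=c(\mathcal H)$ such that every (not necessarily connected) $\mathcal H$-free graph $G$ has fewer than $c$ vertices $v$ for which $G[N(v)]$ has at least $2$ connected components; (ii) there is a positive integer $n$ such that $\mathcal H\le \{K_n^*,\ nP_3,\ K_{1,n}^*,\ K_{2,n},\ CK_n,\ T_n\}$.
   Context: All graphs are finite, simple, undirected. For graphs $H_1,H_2$, write $H_1\prec H_2$ if $H_2$ contains an induced subgraph isomorphic to $H_1$. A graph $G$ is $\mathcal H$-free if no $H\in\mathcal H$ satisfies $H\prec G$. For families $\mathcal H_1,\mathcal H_2$, write $\mathcal H_1\le\mathcal H_2$ if for every $H_2\in\mathcal H_2$ there is $H_1\in\mathcal H_1$ with $H_1\prec H_2$. $N(v)$ is the neighborhood and $G[S]$ the induced subgraph. $K_n$, $E_n$, $P_n$ are the complete graph, edgeless graph, and path on $n$ vertices; $K_{s,t}$ is the complete bipartite graph; $nG$ is the disjoint union of $n$ copies of $G$; $G_1+G_2$ is the join. $K_{1,n}^*$ is obtained from the star $K_{1,n}$ by attaching a new pendant vertex to each leaf; $K_n^*$ is obtained from $K_n$ by attaching a new pendant vertex to each vertex; $CK_n$ is obtained from two disjoint copies of $K_n$ by adding a perfect matching between them; $T_n$ is obtained from the join $K_n+E_n$ by adding one new vertex adjacent to exactly the $n$ vertices of $E_n$. *)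

(* Defs.v *)
From mathcomp Require Import all_boot.
Set Implicit Arguments. Unset Strict Implicit. Unset Printing Implicit Defensive.

Record graph := Graph {
  gn : nat;
  gadj : rel 'I_gn;
  gsym : symmetric gadj;
  girr : irreflexive gadj }.

Definition induced (H1 H2 : graph) : Prop :=
  exists f : 'I_(gn H1) -> 'I_(gn H2),
    injective f /\ forall x y, @gadj H1 x y = @gadj H2 (f x) (f y).

Definition Hfree (Hf : graph -> Prop) (G : graph) : Prop :=
  forall H, Hf H -> ~ induced H G.

Definition fam_le (Hf1 Hf2 : graph -> Prop) : Prop :=
  forall H2, Hf2 H2 -> exists H1, Hf1 H1 /\ induced H1 H2.

Definition nbhd (G : graph) (v : 'I_(gn G)) : {set 'I_(gn G)} :=
  [set u | @gadj G v u].
Definition nbrel (G : graph) (v : 'I_(gn G)) : rel 'I_(gn G) :=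
  fun x y => [&& @gadj G x y, x \in nbhd v & y \in nbhd v].

Definition ncomp_nbhd (G : graph) (v : 'I_(gn G)) : nat :=
  n_comp (nbrel v) (mem (nbhd v)).

Definition disc_vertices (G : graph) : {set 'I_(gn G)} :=
  [set v | 1 < ncomp_nbhd v].

Definition mkrel (m : nat) (f : nat -> nat -> bool) : rel 'I_m :=
  fun x y => (x != y) && (f x y || f y x).
Lemma mkrel_sym m f : symmetric (@mkrel m f).
Proof. by move=> x y; rewrite /mkrel eq_sym orbC. Qed.
Lemma mkrel_irr m f : irreflexive (@mkrel m f).
Proof. by move=> x; rewrite /mkrel eqxx. Qed.
Definition mkgraph (m : nat) (f : nat -> nat -> bool) : graph :=
  @Graph m (@mkrel m f) (@mkrel_sym m f) (@mkrel_irr m f).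

(* K_n^* : clique 0..n-1, pendant n+i attached to i *)
Definition Kstar (n : nat) : graph :=
  mkgraph (2 * n) (fun x y => ((x < n) && (y < n)) || ((x < n) && (y == x + n))).
(* n P_3 : block k = {3k, 3k+1, 3k+2}, middle 3k+1 adjacent to the other two *)
Definition nP3 (n : nat) : graph :=
  mkgraph (3 * n) (fun x y => (x %/ 3 == y %/ 3) && (x %% 3 == 1)).
(* K_{1,n}^* : centre 0, leaves 1..n, pendant n+i attached to leaf i *)
Definition K1nstar (n : nat) : graph :=
  mkgraph (2 * n + 1) (fun x y => ((x == 0) && (1 <= y <= n))
                                || ((1 <= x <= n) && (y == x + n))).
(* K_{2,n} : parts {0,1} and {2,...,n+1} *)
Definition K2n (n : nat) : graph :=
  mkgraph (n + 2) (fun x y => (x < 2) && (2 <= y)).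
(* CK_n : cliques {0..n-1}, {n..2n-1}, matching i -- n+i *)
Definition CK (n : nat) : graph :=
  mkgraph (2 * n) (fun x y => [|| (x < n) && (y < n), (n <= x) && (n <= y)
                               | (x < n) && (y == x + n)]).
(* T_n : K_n on 0..n-1 joined with E_n on n..2n-1, plus vertex 2n adjacent to E_n *)
Definition Tn (n : nat) : graph :=
  mkgraph (2 * n + 1) (fun x y => [|| (x < n) && (y < n),
                                     (x < n) && (n <= y < 2 * n)
                                   | (x == 2 * n) && (n <= y < 2 * n)]).

Definition six_family (n : nat) : graph -> Prop :=
  fun G => G = Kstar n \/ G = nP3 n \/ G = K1nstar n \/ G = K2n n \/ G = CK n \/ G = Tn n.

(* Main.v *)
Require Import Defs.
From mathcomp Require Import all_boot.
From mathcomp Require Import zify.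
From Stdlib Require Import Classical.
Set Implicit Arguments. Unset Strict Implicit. Unset Printing Implicit Defensive.


Definition R (a b : nat) := 2 ^ (a + b).

Lemma ramsey (T : eqType) (r : rel T) a b (s : seq T) : R a b <= size s ->
  exists t, subseq t s /\ ((size t = a /\ pairwise r t) \/
                           (size t = b /\ pairwise (fun x y => ~~ r x y) t)).
Proof.
rewrite /R.
move: {2}(a + b) (erefl (a + b)) => k; elim: k a b s => [|k IH] a b s Hk Hs.
  exists [::]; split; first exact: sub0seq.
  by left; split => //; case: a Hk Hs.
case: a Hk Hs => [|a] Hk Hs.
  by exists [::]; split; [exact: sub0seq| left].
case: b Hk Hs => [|b] Hk Hs.
  by exists [::]; split; [exact: sub0seq| right].
case: s Hs => [|x s] Hs.
  by move: Hs; rewrite /= leqn0 expn_eq0.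
have Hsz : size (filter (r x) s) + size (filter (predC (r x)) s) = size s.
  by rewrite !size_filter count_predC.
have Hs' : 2 ^ k.+1 <= (size s).+1 by rewrite -Hk.
rewrite expnS in Hs'.
have [H1|H2] : 2 ^ k <= size (filter (r x) s) \/ 2 ^ k <= size (filter (predC (r x)) s).
  by lia.
- have e1 : a + b.+1 = k by lia.
  rewrite -e1 in H1.
  have [t [Hts [[Ha Hp]|[Hb Hp]]]] := IH a b.+1 _ e1 H1.
  + exists (x :: t); split.
      by rewrite /= eqxx; apply: subseq_trans Hts (filter_subseq _ _).
    left; split; first by rewrite /= Ha.
    rewrite pairwise_cons Hp andbT; apply/allP => y /(mem_subseq Hts).
    by rewrite mem_filter => /andP[].
  + exists t; split; last by right.
    apply: subseq_trans (subseq_cons _ x); apply: subseq_trans Hts (filter_subseq _ _).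
- have e1 : a.+1 + b = k by lia.
  rewrite -e1 in H2.
  have [t [Hts [[Ha Hp]|[Hb Hp]]]] := IH a.+1 b _ e1 H2.
  + exists t; split; last by left.
    apply: subseq_trans (subseq_cons _ x); apply: subseq_trans Hts (filter_subseq _ _).
  + exists (x :: t); split.
      by rewrite /= eqxx; apply: subseq_trans Hts (filter_subseq _ _).
    right; split; first by rewrite /= Hb.
    rewrite pairwise_cons Hp andbT; apply/allP => y /(mem_subseq Hts).
    by rewrite mem_filter => /andP[].
Qed.


Lemma induced_trans H1 H2 H3 : induced H1 H2 -> induced H2 H3 -> induced H1 H3.
Proof.
move=> [f [fi fa]] [g [gi ga]]; exists (g \o f); split.
  exact: inj_comp.
by move=> x y /=; rewrite fa ga.
Qed.

Lemma induced_mk (m : nat) (f : nat -> nat -> bool) (G : graph)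
  (g : nat -> 'I_(gn G)) :
  (forall i j, i < m -> j < m -> g i = g j -> i = j) ->
  (forall i j, i < m -> j < m -> i != j -> @gadj G (g i) (g j) = f i j || f j i) ->
  induced (mkgraph m f) G.
Proof.
move=> gi ga; exists (fun x : 'I_m => g (val x)); split.
  by move=> x y /(gi _ _ (ltn_ord x) (ltn_ord y)) /val_inj.
move=> x y /=; rewrite /mkrel.
case: (eqVneq x y) => [->|nxy] /=; first by rewrite (girr).
by rewrite ga.
Qed.

Section Conn.
Variable G : graph.
Local Notation V := ('I_(gn G)).
Local Notation adj := (@gadj G).

Lemma nbrel_sym (v : V) : symmetric (nbrel v).
Proof. by move=> x y; rewrite /nbrel gsym (andbC (y \in _)). Qed.

Lemma nb_connect_sym (v : V) : connect_sym (nbrel v).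
Proof. by apply: sym_connect_sym; apply: nbrel_sym. Qed.

Lemma in_nbhd (v u : V) : (u \in nbhd v) = adj v u.
Proof. by rewrite inE. Qed.

Lemma nb_connect1 (v x y : V) : adj v x -> adj v y -> adj x y -> connect (nbrel v) x y.
Proof. by move=> h1 h2 h3; apply: connect1; rewrite /nbrel h3 !in_nbhd h1 h2. Qed.

Lemma connect_in (v x y : V) : adj v x -> connect (nbrel v) x y -> adj v y.
Proof.
move=> hx /connectP[p]; elim: p x hx => [|z p IH] x hx /=; first by move=> _ ->.
by case/andP=> /and3P[_ _ hz] hp; apply: IH hp; rewrite -in_nbhd.
Qed.

Lemma disc_intro (v a b : V) : adj v a -> adj v b -> a != b ->
  (forall y, adj a y -> ~~ adj v y) -> v \in disc_vertices G.
Proof.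
move=> ha hb nab hiso.
have conn_a : forall y, connect (nbrel v) a y -> y = a.
  move=> y /connectP[[|z p]] /=; first by move=> _ ->.
  by case/andP=> /and3P[/hiso hz _]; rewrite in_nbhd (negbTE hz).
rewrite inE /ncomp_nbhd /n_comp_mem.
have ra : root (nbrel v) a = a by apply: conn_a; apply: connect_root.
set rb := root (nbrel v) b.
have hrb : connect (nbrel v) b rb by apply: connect_root.
have nrb : rb != a.
  apply/eqP => eab; move: hrb; rewrite eab (nb_connect_sym v) => /conn_a eba.
  by rewrite eba eqxx in nab.
have : #|[set a; rb]| <= #|predI (roots (nbrel v)) (mem (nbhd v))|.
  apply: subset_leq_card; apply/subsetP => x; rewrite !inE => /orP[]/eqP->.
    by rewrite /roots /= ra eqxx ha.
  rewrite /roots /= root_root ?eqxx //=; last exact: nb_connect_sym.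
  by apply: connect_in hrb.
by rewrite cards2 eq_sym nrb.
Qed.

Lemma disc_elim (v u : V) : v \in disc_vertices G -> adj v u ->
  exists w, adj v w && ~~ connect (nbrel v) u w.
Proof.
move=> hv hu.
case: (boolP [exists w, adj v w && ~~ connect (nbrel v) u w]) => [/existsP//|/existsPn hall].
exfalso.
move: hv; rewrite inE /ncomp_nbhd /n_comp_mem ltnNge => /negP; apply.
rewrite -(cards1 (root (nbrel v) u)); apply: subset_leq_card; apply/subsetP => x.
rewrite !inE /roots /= => /andP[/eqP rx hx].
move: (hall x); rewrite hx /= negbK => /(rootP (nb_connect_sym v)).
by rewrite rx => ->.
Qed.

Lemma disc_nb (v : V) : v \in disc_vertices G -> exists u, adj v u.
Proof.
move=> hv; move: (hv); rewrite inE /ncomp_nbhd /n_comp_mem => h.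
have /card_gt0P [x] : 0 < #|predI (roots (nbrel v)) (mem (nbhd v))| by apply: leq_trans h.
by rewrite !inE => /andP[_ hx]; exists x.
Qed.

End Conn.


Section Emb.
Variable G : graph.
Local Notation V := ('I_(gn G)).
Local Notation adj := (@gadj G).

Lemma emb_Kstar n (cl pe : nat -> V) :
 (forall i j, i<n -> j<n -> cl i = cl j -> i = j) ->
 (forall i j, i<n -> j<n -> pe i = pe j -> i = j) ->
 (forall i j, i<n -> j<n -> cl i != pe j) ->
 (forall i j, i<n -> j<n -> i != j -> adj (cl i) (cl j)) ->
 (forall i j, i<n -> j<n -> adj (cl i) (pe j) = (i == j)) ->
 (forall i j, i<n -> j<n -> ~~ adj (pe i) (pe j)) ->
 induced (Kstar n) G.
Proof.
move=> cli pei cpe ccl cp pp.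
apply: (@induced_mk _ _ _ (fun x => if x < n then cl x else pe (x - n))).
- move=> i j hi hj; case: (ltnP i n) => hi'; case: (ltnP j n) => hj'.
  + exact: cli.
  + move=> e; have := cpe i (j - n) hi' ltac:(lia); by rewrite e eqxx.
  + move=> e; have := cpe j (i - n) hj' ltac:(lia); by rewrite e eqxx.
  + move=> /pei; lia.
- move=> i j hi hj nij /=; case: (ltnP i n) => hi'; case: (ltnP j n) => hj' /=.
  + by rewrite ccl.
  + rewrite cp //; last lia.
    rewrite orbF; apply/eqP/eqP; lia.
  + rewrite gsym cp //; last lia.
    apply/eqP/eqP; lia.
  + by apply/negbTE/pp; lia.
Qed.


Lemma emb_nP3 n (t : nat -> nat -> V) :
 (forall k l r s, k<n -> l<n -> r<3 -> s<3 -> t k r = t l s -> k = l /\ r = s) ->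
 (forall k l r s, k<n -> l<n -> r<3 -> s<3 -> (k != l) || (r != s) ->
     adj (t k r) (t l s) = (k == l) && ((r == 1) || (s == 1))) ->
 induced (nP3 n) G.
Proof.
move=> ti ta.
apply: (@induced_mk _ _ _ (fun x => t (x %/ 3) (x %% 3))).
- move=> i j hi hj /ti []; try lia.
- move=> i j hi hj nij /=; rewrite ta; lia.
Qed.

Lemma emb_K1nstar n (c : V) (l pe : nat -> V) :
 (forall i, i<n -> c != l i) ->
 (forall i, i<n -> c != pe i) ->
 (forall i j, i<n -> j<n -> l i = l j -> i = j) ->
 (forall i j, i<n -> j<n -> pe i = pe j -> i = j) ->
 (forall i j, i<n -> j<n -> l i != pe j) ->
 (forall i, i<n -> adj c (l i)) ->
 (forall i, i<n -> ~~ adj c (pe i)) ->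
 (forall i j, i<n -> j<n -> ~~ adj (l i) (l j)) ->
 (forall i j, i<n -> j<n -> adj (l i) (pe j) = (i == j)) ->
 (forall i j, i<n -> j<n -> ~~ adj (pe i) (pe j)) ->
 induced (K1nstar n) G.
Proof.
move=> cl cp li pi lp acl acp all alp app.
apply: (@induced_mk _ _ _ (fun x => if x == 0 then c else if x <= n then l x.-1 else pe (x - n).-1)).
- move=> i j hi hj.
  case: (posnP i) => [->|i0]; case: (posnP j) => [->|j0] //=;
  rewrite ?(gtn_eqF i0) ?(gtn_eqF j0) /=.
  + case: (leqP j n) => hj' e.
      by have := cl j.-1 ltac:(lia); rewrite e eqxx.
    by have := cp (j - n).-1 ltac:(lia); rewrite e eqxx.
  + case: (leqP i n) => hi' e.
      by have := cl i.-1 ltac:(lia); rewrite e eqxx.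
    by have := cp (i - n).-1 ltac:(lia); rewrite e eqxx.
  + case: (leqP i n) => hi'; case: (leqP j n) => hj' e.
    * have := li i.-1 j.-1 ltac:(lia) ltac:(lia) e; lia.
    * by have := lp i.-1 (j - n).-1 ltac:(lia) ltac:(lia); rewrite e eqxx.
    * by have := lp j.-1 (i - n).-1 ltac:(lia) ltac:(lia); rewrite e eqxx.
    * have := pi (i - n).-1 (j - n).-1 ltac:(lia) ltac:(lia) e; lia.
- move=> i j hi hj nij /=.
  case: (posnP i) => [i0|i0]; case: (posnP j) => [j0|j0]; try lia;
  rewrite ?i0 ?j0 ?(gtn_eqF i0) ?(gtn_eqF j0) /=.
  + case: (leqP j n) => hj'.
      by rewrite acl; lia.
    by rewrite (negbTE (acp _ _)); lia.
  + case: (leqP i n) => hi'.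
      by rewrite gsym acl; lia.
    by rewrite gsym (negbTE (acp _ _)); lia.
  + case: (leqP i n) => hi'; case: (leqP j n) => hj'.
    * by rewrite (negbTE (all _ _ _ _)); lia.
    * by rewrite alp; lia.
    * by rewrite gsym alp; lia.
    * by rewrite (negbTE (app _ _ _ _)); lia.
Qed.

Lemma case3 i : i = 0 \/ i = 1 \/ ((i == 0) = false /\ (i == 1) = false /\ 1 < i).
Proof. case: i => [|[|i]]; [left|right;left|right;right] => //. Qed.

Lemma emb_K2n n (x0 x1 : V) (w : nat -> V) :
 x0 != x1 ->
 (forall i, i<n -> x0 != w i) ->
 (forall i, i<n -> x1 != w i) ->
 (forall i j, i<n -> j<n -> w i = w j -> i = j) ->
 ~~ adj x0 x1 ->
 (forall i, i<n -> adj x0 (w i)) ->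
 (forall i, i<n -> adj x1 (w i)) ->
 (forall i j, i<n -> j<n -> ~~ adj (w i) (w j)) ->
 induced (K2n n) G.
Proof.
move=> n01 n0 n1 wi a01 a0 a1 aw.
apply: (@induced_mk _ _ _ (fun x => if x == 0 then x0 else if x == 1 then x1 else w (x - 2))).
- move=> i j hi hj /=.
  case: (case3 i) => [->|[->|[-> [-> h2]]]];
  case: (case3 j) => [->|[->|[-> [-> h2']]]] => //= e.
  all: try by (move: n01; rewrite e eqxx).
  all: try by (move: n01; rewrite -e eqxx).
  all: try by (move: (n0 (j - 2) ltac:(lia)); rewrite e eqxx).
  all: try by (move: (n1 (j - 2) ltac:(lia)); rewrite e eqxx).
  all: try by (move: (n0 (i - 2) ltac:(lia)); rewrite e eqxx).
  all: try by (move: (n1 (i - 2) ltac:(lia)); rewrite e eqxx).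
  have := wi (i - 2) (j - 2) ltac:(lia) ltac:(lia) e; lia.
- move=> i j hi hj nij /=.
  case: (case3 i) => [->|[->|[-> [-> h2]]]];
  case: (case3 j) => [->|[->|[-> [-> h2']]]] => //=.
  all: try lia.
  all: try by rewrite (negbTE a01).
  all: try by rewrite gsym (negbTE a01).
  all: try by rewrite a0 //; lia.
  all: try by rewrite a1 //; lia.
  all: try by rewrite gsym a0 //; lia.
  all: try by rewrite gsym a1 //; lia.
  all: try by rewrite girr.
  by rewrite (negbTE (aw (i - 2) (j - 2) _ _)); lia.
Qed.


Lemma emb_CK n (sq q : nat -> V) :
 (forall i j, i<n -> j<n -> sq i = sq j -> i = j) ->
 (forall i j, i<n -> j<n -> q i = q j -> i = j) ->
 (forall i j, i<n -> j<n -> sq i != q j) ->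
 (forall i j, i<n -> j<n -> i != j -> adj (sq i) (sq j)) ->
 (forall i j, i<n -> j<n -> i != j -> adj (q i) (q j)) ->
 (forall i j, i<n -> j<n -> adj (sq i) (q j) = (i == j)) ->
 induced (CK n) G.
Proof.
move=> si qi sqn ss qq sqa.
apply: (@induced_mk _ _ _ (fun x => if x < n then sq x else q (x - n))).
- move=> i j hi hj; case: (ltnP i n) => hi'; case: (ltnP j n) => hj'.
  + exact: si.
  + move=> e; have := sqn i (j - n) hi' ltac:(lia); by rewrite e eqxx.
  + move=> e; have := sqn j (i - n) hj' ltac:(lia); by rewrite e eqxx.
  + move=> /qi; lia.
- move=> i j hi hj nij /=; case: (ltnP i n) => hi'; case: (ltnP j n) => hj' /=.
  + by rewrite ss.
  + by rewrite sqa //; lia.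
  + by rewrite gsym sqa //; lia.
  + by rewrite qq //; lia.
Qed.

End Emb.


Lemma sym_pairwise (T : eqType) (c : rel T) (u : seq T) :
  symmetric c -> uniq u -> pairwise c u -> {in u &, forall v w, v != w -> c v w}.
Proof.
move=> sc; elim: u => [|a u IH] //= /andP[au uu] /andP[/allP ha hu] v w.
rewrite !inE => /orP[/eqP->|vu] /orP[/eqP->|wu]; rewrite ?eqxx //.
- by move=> _; apply: ha.
- by move=> _; rewrite sc; apply: ha.
- by apply: IH.
Qed.

Lemma sym2 (T : eqType) (r : rel T) (u : seq T) : uniq u -> pairwise r u ->
  pairwise (fun v w => r w v) u -> {in u &, forall v w, v != w -> r v w}.
Proof.
move=> uu p1 p2.
have : pairwise [rel v w | r v w && r w v] u by rewrite pairwise_relI p1.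
move=> /(sym_pairwise _ uu) h v w vu wu nvw.
have hs : symmetric [rel v w | r v w && r w v] by move=> v' w' /=; rewrite andbC.
by have /andP[] := h hs v w vu wu nvw.
Qed.

Lemma two_elems (T : eqType) (S : seq T) : uniq S -> 1 < size S ->
  exists a b, [/\ a \in S, b \in S & a != b].
Proof.
case: S => [|a [|b S']] //= /andP[]; rewrite inE negb_or => /andP[nab _] _ _.
by exists a, b; split; rewrite ?inE ?eqxx ?orbT.
Qed.

Section NthFacts.
Variable T : eqType.
Variables (x0 : T) (y : seq T).
Lemma nth2 (P : T -> T -> Prop) : {in y &, forall v w, P v w} ->
  forall i j, i < size y -> j < size y -> P (nth x0 y i) (nth x0 y j).
Proof. by move=> h i j hi hj; apply: h; apply: mem_nth. Qed.
Lemma nth2n (P : T -> T -> Prop) : uniq y -> {in y &, forall v w, v != w -> P v w} ->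
  forall i j, i < size y -> j < size y -> i != j -> P (nth x0 y i) (nth x0 y j).
Proof. by move=> uy h i j hi hj nij; apply: h; rewrite ?mem_nth ?nth_uniq. Qed.
Lemma nth1 (P : T -> Prop) : {in y, forall v, P v} ->
  forall i, i < size y -> P (nth x0 y i).
Proof. by move=> h i hi; apply: h; apply: mem_nth. Qed.
Lemma nthi : uniq y -> forall i j, i < size y -> j < size y -> nth x0 y i = nth x0 y j -> i = j.
Proof. by move=> uy i j hi hj /eqP; rewrite nth_uniq // => /eqP. Qed.
Lemma nthe : uniq y -> forall i j, i < size y -> j < size y -> (nth x0 y i == nth x0 y j) = (i == j).
Proof. by move=> uy i j hi hj; rewrite nth_uniq. Qed.
End NthFacts.

Section Main.
Variable G : graph.
Local Notation V := ('I_(gn G)).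
Local Notation adj := (@gadj G).
Variable n : nat.
Hypothesis n0 : 0 < n.
Hypothesis nKs : ~ induced (Kstar n) G.
Hypothesis nP : ~ induced (nP3 n) G.
Hypothesis nK1 : ~ induced (K1nstar n) G.
Hypothesis nK2 : ~ induced (K2n n) G.
Hypothesis nCK : ~ induced (CK n) G.
Local Notation D := (disc_vertices G).

Lemma adj_neq (a b : V) : adj a b -> a != b.
Proof. by apply: contraTneq => ->; rewrite girr. Qed.

Lemma pickS (P : pred V) (d : V) : (exists w, P w) -> P (odflt d [pick w | P w]).
Proof. by case: pickP => [w //|/= h [w]]; rewrite h. Qed.

Lemma K2_from (x0 x1 : V) (t : seq V) : uniq t -> size t = n -> x0 != x1 ->
  ~~ adj x0 x1 -> {in t, forall w, adj x0 w && adj x1 w} ->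
  {in t &, forall v w, ~~ adj v w} -> False.
Proof.
move=> ut st n01 a01 ha hi0; apply: nK2.
apply: (@emb_K2n G n x0 x1 (fun i => nth x0 t i)) => //; rewrite -?st.
- by move=> i hi; have /ha/andP[/adj_neq] := mem_nth x0 hi.
- by move=> i hi; have /ha/andP[_ /adj_neq] := mem_nth x0 hi.
- exact: nthi.
- by move=> i hi; have /ha/andP[] := mem_nth x0 hi.
- by move=> i hi; have /ha/andP[] := mem_nth x0 hi.
- by move=> i j hi hj; apply: hi0; apply: mem_nth.
Qed.


Lemma Kstar_from (pf : V -> V) (y : seq V) : uniq y -> size y = n ->
  {in y &, forall v w, pf v != w} ->
  {in y &, forall v w, v != w -> adj (pf v) (pf w)} ->
  {in y &, forall v w, adj (pf v) w = (v == w)} ->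
  {in y &, forall v w, ~~ adj v w} -> False.
Proof.
case: y => [|v0 y'] uy sy h1 h2 h3 h4; first by (simpl in sy; lia).
apply: nKs; set y := v0 :: y' in uy sy h1 h2 h3 h4 *.
apply: (@emb_Kstar G n (fun i => pf (nth v0 y i)) (fun i => nth v0 y i)); rewrite -?sy.
- move=> i j hi hj e; apply: (nthi (x0:=v0) uy hi hj); apply/eqP.
  by rewrite -(h3 _ _ (mem_nth v0 hi) (mem_nth v0 hj)) e h3 ?mem_nth // eqxx.
- exact: nthi.
- by move=> i j hi hj; apply: h1; apply: mem_nth.
- by move=> i j hi hj nij; apply: h2; rewrite ?mem_nth ?nthe.
- by move=> i j hi hj; rewrite h3 ?mem_nth ?nthe.
- by move=> i j hi hj; apply: h4; apply: mem_nth.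
Qed.


Lemma CK_from (pf : V -> V) (y : seq V) : uniq y -> size y = n ->
  {in y &, forall v w, pf v != w} ->
  {in y &, forall v w, v != w -> adj v w} ->
  {in y &, forall v w, v != w -> adj (pf v) (pf w)} ->
  {in y &, forall v w, adj (pf v) w = (v == w)} -> False.
Proof.
case: y => [|v0 y'] uy sy h1 h2 h3 h4; first by (simpl in sy; lia).
apply: nCK; set y := v0 :: y' in uy sy h1 h2 h3 h4 *.
apply: (@emb_CK G n (fun i => nth v0 y i) (fun i => pf (nth v0 y i))); rewrite -?sy.
- exact: nthi.
- move=> i j hi hj e; apply: (nthi (x0:=v0) uy hi hj); apply/eqP.
  by rewrite -(h4 _ _ (mem_nth v0 hi) (mem_nth v0 hj)) e h4 ?mem_nth // eqxx.
- by move=> i j hi hj; rewrite eq_sym; apply: h1; apply: mem_nth.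
- by move=> i j hi hj nij; apply: h2; rewrite ?mem_nth ?nthe.
- by move=> i j hi hj nij; apply: h3; rewrite ?mem_nth ?nthe.
- by move=> i j hi hj; rewrite gsym h4 ?mem_nth // eq_sym nthe.
Qed.

Lemma K1_from (c : V) (pf : V -> V) (y : seq V) : uniq y -> size y = n ->
  {in y, forall v, adj c v} ->
  {in y, forall v, ~~ adj c (pf v)} ->
  {in y, forall v, c != pf v} ->
  {in y &, forall v w, pf v != w} ->
  {in y &, forall v w, ~~ adj v w} ->
  {in y &, forall v w, v != w -> ~~ adj (pf v) (pf w)} ->
  {in y &, forall v w, adj (pf v) w = (v == w)} -> False.
Proof.
case: y => [|v0 y'] uy sy h1 h2 h3 h4 h5 h6 h7; first by (simpl in sy; lia).
apply: nK1; set y := v0 :: y' in uy sy h1 h2 h3 h4 h5 h6 h7 *.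
apply: (@emb_K1nstar G n c (fun i => nth v0 y i) (fun i => pf (nth v0 y i))); rewrite -?sy.
- by move=> i hi; apply: adj_neq; apply: h1; apply: mem_nth.
- by move=> i hi; apply: h3; apply: mem_nth.
- exact: nthi.
- move=> i j hi hj e; apply: (nthi (x0:=v0) uy hi hj); apply/eqP.
  by rewrite -(h7 _ _ (mem_nth v0 hi) (mem_nth v0 hj)) e h7 ?mem_nth // eqxx.
- by move=> i j hi hj; rewrite eq_sym; apply: h4; apply: mem_nth.
- by move=> i hi; apply: h1; apply: mem_nth.
- by move=> i hi; apply: h2; apply: mem_nth.
- by move=> i j hi hj; apply: h5; apply: mem_nth.
- by move=> i j hi hj; rewrite gsym h7 ?mem_nth // eq_sym nthe.
- move=> i j hi hj; case: (eqVneq i j) => [->|nij]; first by rewrite girr.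
  by apply: h6; rewrite ?mem_nth ?nthe.
Qed.


Lemma neq_by (x x' z : V) : adj x z -> ~~ adj x' z -> x != x'.
Proof. by move=> h1; apply: contraNneq => <-. Qed.

Lemma nP3_from (a b : V -> V) (y : seq V) : uniq y -> size y = n ->
  {in y, forall v, adj v (a v) && adj v (b v)} ->
  {in y, forall v, ~~ adj (a v) (b v)} ->
  {in y, forall v, a v != b v} ->
  {in y &, forall v w, ~~ adj v w} ->
  {in y &, forall v w, v != w -> ~~ adj (a v) w && ~~ adj (b v) w} ->
  {in y &, forall v w, v != w -> [&& ~~ adj (a v) (a w), ~~ adj (b v) (b w) & ~~ adj (a v) (b w)]} ->
  False.
Proof.
case: y => [|v0 y'] uy sy s1 s2 s3 d1 d2 d3; first by (simpl in sy; lia).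
apply: nP; set y := v0 :: y' in uy sy s1 s2 s3 d1 d2 d3 *.
pose tt v r := if r == 0 then a v else if r == 1 then v else b v.
have key : forall v w, v \in y -> w \in y -> v != w -> forall r s, r < 3 -> s < 3 ->
    (tt v r != tt w s) && ~~ adj (tt v r) (tt w s).
  move=> v w vy wy nvw r s hr hs.
  have /andP[av bv] := s1 v vy; have /andP[aw bw] := s1 w wy.
  have nvw' : w != v by rewrite eq_sym.
  have /andP[naw nbw] := d2 v w vy wy nvw.
  have /andP[naw' nbw'] := d2 w v wy vy nvw'.
  have /and3P[naa nbb nab] := d3 v w vy wy nvw.
  have /and3P[_ _ nab'] := d3 w v wy vy nvw'.
  have nvw2 := d1 v w vy wy.
  have Av : adj (a v) v by rewrite gsym.
  have Bv : adj (b v) v by rewrite gsym.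
  have Aw : adj (a w) w by rewrite gsym.
  have Bw : adj (b w) w by rewrite gsym.
  have nwv : ~~ adj w v by rewrite gsym.
  case: r hr => [|[|[|r]]] hr //; case: s hs => [|[|[|s]]] hs //; rewrite /tt /=.
  + by rewrite naa (neq_by Av naw').
  + by rewrite naw (neq_by Av nwv).
  + by rewrite nab (neq_by Av nbw').
  + by rewrite gsym naw' eq_sym (neq_by Aw nvw2).
  + by rewrite nvw2 nvw.
  + by rewrite gsym nbw' eq_sym (neq_by Bw nvw2).
  + by rewrite gsym nab' (neq_by Bv naw').
  + by rewrite nbw (neq_by Bv nwv).
  + by rewrite nbb (neq_by Bv nbw').
have same : forall v, v \in y -> forall r s, r < 3 -> s < 3 -> r != s ->
    (tt v r != tt v s) && (adj (tt v r) (tt v s) == ((r == 1) || (s == 1))).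
  move=> v vy r s hr hs nrs.
  have /andP[av bv] := s1 v vy.
  have := s2 v vy; have := s3 v vy.
  case: r hr nrs => [|[|[|r]]] hr //; case: s hs => [|[|[|s]]] hs //; rewrite /tt /= => nrs h3 h2.
  + by rewrite gsym av eq_sym adj_neq.
  + by rewrite h3 (negbTE h2).
  + by rewrite av adj_neq.
  + by rewrite bv adj_neq.
  + by rewrite eq_sym h3 gsym (negbTE h2).
  + by rewrite gsym bv eq_sym adj_neq.
apply: (@emb_nP3 G n (fun k r => tt (nth v0 y k) r)); rewrite -?sy.
- move=> k l r s hk hl hr hs e.
  case: (eqVneq k l) => [ekl|nkl].
    subst l; split => //; apply/eqP; case: (eqVneq r s) => // nrs.
    by have /andP[] := same _ (mem_nth v0 hk) r s hr hs nrs; rewrite e eqxx.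
  have := key _ _ (mem_nth v0 hk) (mem_nth v0 hl) ltac:(by rewrite nthe) r s hr hs.
  by rewrite e eqxx.
- move=> k l r s hk hl hr hs.
  case: (eqVneq k l) => [ekl|nkl] /=.
    subst l => nrs.
    by have /andP[_ /eqP] := same _ (mem_nth v0 hk) r s hr hs nrs.
  have /andP[_ /negbTE ->] := key _ _ (mem_nth v0 hk) (mem_nth v0 hl) ltac:(by rewrite nthe) r s hr hs.
  by [].
Qed.


Definition M0 := R (n+1) (R (n+1) (R n n)).

Lemma hd (x : V) (s : seq V) : uniq s -> {in s, forall v, v \in D} ->
  {in s, forall v, adj x v} -> {in s &, forall v w, ~~ adj v w} -> size s < M0.
Proof.
move=> us sD sx si; rewrite ltnNge; apply/negP => hs.
pose p v := odflt v [pick w | adj v w && ~~ connect (nbrel v) x w].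
have hp : forall v, v \in s -> adj v (p v) && ~~ connect (nbrel v) x (p v).
  move=> v vs; rewrite /p; apply: (pickS (P := fun w => adj v w && ~~ connect (nbrel v) x w)).
  apply: (@disc_elim G v x); first exact: sD.
  by rewrite gsym sx.
have pa : {in s, forall v, adj v (p v)} by move=> v /hp /andP[].
have px : {in s, forall v, ~~ adj x (p v)}.
  move=> v vs; have /andP[h1 h2] := hp v vs; apply: contra h2 => h3.
  by apply: nb_connect1 => //; rewrite gsym sx.
have pxn : {in s, forall v, x != p v}.
  move=> v vs; have /andP[h1 h2] := hp v vs; apply: contra h2 => /eqP <-.
  exact: connect0.
have pne : {in s &, forall v w, p v != w}.
  move=> v w vs ws; apply/eqP => e; move: (si v w vs ws); rewrite -e.
  by rewrite pa.
have k2 : forall v t, v \in s -> subseq t s -> size t = n ->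
    {in t, forall w, adj (p v) w} -> False.
  move=> v t vs ts st ht.
  apply: (@K2_from x (p v) t (subseq_uniq ts us) st (pxn v vs) (px v vs)).
    by move=> w wt; rewrite sx ?ht //; apply: (mem_subseq ts).
  by move=> w w' wt wt'; apply: si; apply: (mem_subseq ts).
have [t [ts [[st pt]|[st pt]]]] := ramsey (fun v w => adj (p v) w) hs.
  case: t ts st pt => [|v t'] ts st; first by move: st => /=; lia.
  rewrite pairwise_cons => /andP[/allP pt _].
  apply: (k2 v t') => //.
  - by apply: (mem_subseq ts); rewrite inE eqxx.
  - exact: cons_subseq ts.
  - by move: st => /=; lia.
have := @ramsey _ (fun v w => adj (p w) v) (n+1) (R n n) t; rewrite st => /(_ (leqnn _)).
move=> [t2 [t2s [[st2 pt2]|[st2 pu2]]]].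
  case/lastP: t2 t2s st2 pt2 => [|t' w] t2s st2; first by move: st2 => /=; lia.
  rewrite pairwise_rcons => /andP[/allP pt2 _].
  have t2s' := subseq_trans t2s ts.
  apply: (k2 w t') => //.
  - by apply: (mem_subseq t2s'); rewrite mem_rcons inE eqxx.
  - exact: subseq_trans (subseq_rcons _ _) t2s'.
  - by move: st2; rewrite size_rcons; lia.
set u := t2 in t2s st2 pu2.
have us' := subseq_trans t2s ts.
have uu : uniq u := subseq_uniq us' us.
have pu1 : pairwise (fun v w => ~~ adj (p v) w) u := subseq_pairwise t2s pt.
have hu := sym2 uu pu1 pu2.
have [y [ys [[sy py]|[sy py]]]] := @ramsey _ (fun v w => adj (p v) (p w)) n n u (eq_leq (esym st2)).
- have ys' := subseq_trans ys us'.
  have inys : {subset y <= s} := mem_subseq ys'.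
  have uy := subseq_uniq ys' us.
  apply: (@Kstar_from p y uy sy).
  + by move=> v w /inys vs /inys ws; apply: pne.
  + apply: sym_pairwise uy py => v w; exact: gsym.
  + move=> v w vy wy; case: (eqVneq v w) => [->|nvw]; first by rewrite gsym pa ?inys.
    apply/negbTE; apply: (hu v w) => //; exact: (mem_subseq ys).
  + by move=> v w /inys vs /inys ws; apply: si.
- have ys' := subseq_trans ys us'.
  have inys : {subset y <= s} := mem_subseq ys'.
  have uy := subseq_uniq ys' us.
  apply: (@K1_from x p y uy sy).
  + by move=> v /inys; apply: sx.
  + by move=> v /inys; apply: px.
  + by move=> v /inys; apply: pxn.
  + by move=> v w /inys vs /inys ws; apply: pne.
  + by move=> v w /inys vs /inys ws; apply: si.
  + apply: sym_pairwise uy py => v w; by rewrite gsym.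
  + move=> v w vy wy; case: (eqVneq v w) => [->|nvw]; first by rewrite gsym pa ?inys.
    apply/negbTE; apply: (hu v w) => //; exact: (mem_subseq ys).
Qed.


Lemma Kstar_from2 (pf : V -> V) (y : seq V) : uniq y -> size y = n ->
  {in y &, forall v w, pf v != w} ->
  {in y &, forall v w, v != w -> adj v w} ->
  {in y &, forall v w, adj (pf v) w = (v == w)} ->
  {in y &, forall v w, v != w -> ~~ adj (pf v) (pf w)} -> False.
Proof.
case: y => [|v0 y'] uy sy h1 h2 h3 h4; first by (simpl in sy; lia).
apply: nKs; set y := v0 :: y' in uy sy h1 h2 h3 h4 *.
apply: (@emb_Kstar G n (fun i => nth v0 y i) (fun i => pf (nth v0 y i))); rewrite -?sy.
- exact: nthi.
- move=> i j hi hj e; apply: (nthi (x0:=v0) uy hi hj); apply/eqP.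
  by rewrite -(h3 _ _ (mem_nth v0 hi) (mem_nth v0 hj)) e h3 ?mem_nth // eqxx.
- by move=> i j hi hj; rewrite eq_sym; apply: h1; apply: mem_nth.
- by move=> i j hi hj nij; apply: h2; rewrite ?mem_nth ?nthe.
- by move=> i j hi hj; rewrite gsym h3 ?mem_nth // eq_sym nthe.
- move=> i j hi hj; case: (eqVneq i j) => [->|nij]; first by rewrite girr.
  by apply: h4; rewrite ?mem_nth ?nthe.
Qed.


Lemma clique_case (S : seq V) : uniq S -> size S = R n n ->
  {in S, forall v, v \in D} -> pairwise adj S -> False.
Proof.
move=> uS sS SD pS.
have hS : {in S &, forall v w, v != w -> adj v w}.
  by apply: sym_pairwise uS pS => v w; exact: gsym.
have two : 1 < size S by rewrite sS /R; apply: (@leq_trans (2 ^ 1)) => //; rewrite leq_exp2l; lia.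
pose P v w := adj v w && all (fun u => (u == v) || (~~ adj w u && (w != u))) S.
pose q v := odflt v [pick w | P v w].
have hq : {in S, forall v, P v (q v)}.
  move=> v vS; rewrite /q; apply: (pickS (P := P v)).
  have [u0 [u0S nu0]] : exists u0, u0 \in S /\ u0 != v.
    have [a [b [aS bS nab]]] := two_elems uS two.
    case: (eqVneq a v) => [eav|nav]; last by exists a.
    by exists b; split => //; rewrite -eav eq_sym.
  have avu0 : adj v u0 by apply: hS => //; rewrite eq_sym.
  have [w /andP[vw nw]] := disc_elim (SD v vS) avu0.
  exists w; rewrite /P vw /=; apply/allP => u uin.
  case: (eqVneq u v) => //= nuv.
  have avu : adj v u by apply: hS => //; rewrite eq_sym.
  have cu : connect (nbrel v) u0 u.
    case: (eqVneq u0 u) => [->|nu]; first exact: connect0.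
    by apply: nb_connect1 => //; apply: hS.
  apply/andP; split.
    apply: contra nw => wu; apply: connect_trans cu _.
    by apply: nb_connect1 => //; rewrite gsym.
  by apply: contra nw => /eqP ->.
have qa : {in S, forall v, adj v (q v)} by move=> v /hq /andP[].
have qn : {in S &, forall v w, v != w -> ~~ adj (q v) w && (q v != w)}.
  move=> v w vS wS nvw; have /andP[_ /allP /(_ w wS)] := hq v vS.
  by rewrite eq_sym (negbTE nvw).
have qne : {in S &, forall v w, q v != w}.
  move=> v w vS wS; case: (eqVneq v w) => [->|nvw].
    by rewrite eq_sym; apply: adj_neq; apply: qa.
  by have /andP[] := qn v w vS wS nvw.
have qadj : {in S &, forall v w, adj (q v) w = (v == w)}.
  move=> v w vS wS; case: (eqVneq v w) => [->|nvw]; first by rewrite gsym qa.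
  by apply/negbTE; have /andP[] := qn v w vS wS nvw.
have [y [yS [[sy py]|[sy py]]]] := @ramsey _ (fun v w => adj (q v) (q w)) n n S (eq_leq (esym sS)).
- have inyS : {subset y <= S} := mem_subseq yS.
  have uy := subseq_uniq yS uS.
  apply: (@CK_from q y uy sy).
  + by move=> v w /inyS vS /inyS wS; apply: qne.
  + by move=> v w /inyS vS /inyS wS; apply: hS.
  + by apply: sym_pairwise uy py => v w; exact: gsym.
  + by move=> v w /inyS vS /inyS wS; apply: qadj.
- have inyS : {subset y <= S} := mem_subseq yS.
  have uy := subseq_uniq yS uS.
  apply: (@Kstar_from2 q y uy sy).
  + by move=> v w /inyS vS /inyS wS; apply: qne.
  + by move=> v w /inyS vS /inyS wS; apply: hS.
  + by move=> v w /inyS vS /inyS wS; apply: qadj.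
  + by apply: sym_pairwise uy py => v w; rewrite gsym.
Qed.


Definition L3 := R (n+2) n.
Definition L2 := R (n+2) L3.
Definition L1 := R n L2.
Definition L := R n L1.
Definition B1 := R (2 * M0 + 1) L.
Definition B := R (2 * M0 + 1) B1.

Lemma indep_case (I : seq V) : uniq I -> size I = B ->
  {in I, forall v, v \in D} -> pairwise (fun v w => ~~ adj v w) I -> False.
Proof.
move=> uI sI ID pI.
have hI : {in I &, forall v w, ~~ adj v w}.
  move=> v w vI wI; case: (eqVneq v w) => [->|nvw]; first by rewrite girr.
  by apply: (sym_pairwise _ uI pI) => // v' w'; rewrite gsym.
pose a v := odflt v [pick w | adj v w].
pose b v := odflt v [pick w | adj v w && ~~ connect (nbrel v) (a v) w].
have av : {in I, forall v, adj v (a v)}.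
  move=> v vI; rewrite /a; apply: (pickS (P := fun w => adj v w)).
  exact: disc_nb (ID v vI).
have hb : {in I, forall v, adj v (b v) && ~~ connect (nbrel v) (a v) (b v)}.
  move=> v vI; rewrite /b; apply: (pickS (P := fun w => adj v w && ~~ connect (nbrel v) (a v) w)).
  exact: disc_elim (ID v vI) (av v vI).
have bv : {in I, forall v, adj v (b v)} by move=> v /hb /andP[].
have nab : {in I, forall v, ~~ adj (a v) (b v)}.
  move=> v vI; have /andP[_ h] := hb v vI; apply: contra h => h.
  by apply: nb_connect1 => //; [apply: av | apply: bv].
have neab : {in I, forall v, a v != b v}.
  move=> v vI; have /andP[_ h] := hb v vI; apply: contra h => /eqP <-.
  exact: connect0.
have ane : {in I &, forall v w, a v != w}.
  by move=> v w vI wI; apply/eqP => e; have := hI v w vI wI; rewrite -e av.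
have bne : {in I &, forall v w, b v != w}.
  by move=> v w vI wI; apply/eqP => e; have := hI v w vI wI; rewrite -e bv.
pose bad v w := adj (a v) w || adj (b v) w.
have clean : forall v t, v \in I -> subseq t I -> size t = 2 * M0 ->
    {in t, forall w, bad v w} -> False.
  move=> v t vI tI st ht.
  have tI' : {subset t <= I} := mem_subseq tI.
  have ut := subseq_uniq tI uI.
  have hsz : size (filter (adj (a v)) t) + size (filter (predC (adj (a v))) t) = size t.
    by rewrite !size_filter count_predC.
  have [h1|h2] : M0 <= size (filter (adj (a v)) t) \/ M0 <= size (filter (predC (adj (a v))) t) by lia.
  - suff : size (filter (adj (a v)) t) < M0 by rewrite ltnNge h1.
    apply: (@hd (a v) _ (filter_uniq _ ut)).
    + by move=> w; rewrite mem_filter => /andP[_ /tI']; apply: ID.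
    + by move=> w; rewrite mem_filter => /andP[].
    + by move=> w w'; rewrite !mem_filter => /andP[_ /tI' wI] /andP[_ /tI' wI']; apply: hI.
  - suff : size (filter (predC (adj (a v))) t) < M0 by rewrite ltnNge h2.
    apply: (@hd (b v) _ (filter_uniq _ ut)).
    + by move=> w; rewrite mem_filter => /andP[_ /tI']; apply: ID.
    + move=> w; rewrite mem_filter => /andP[/= h /ht].
      by rewrite /bad (negbTE h).
    + by move=> w w'; rewrite !mem_filter => /andP[_ /tI' wI] /andP[_ /tI' wI']; apply: hI.
have [t [tI [[st pt]|[st pt]]]] := @ramsey _ bad (2 * M0 + 1) B1 I (eq_leq (esym sI)).
  case: t tI st pt => [|v t'] tI st; first by move: st => /=; lia.
  rewrite pairwise_cons => /andP[/allP pt _].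
  apply: (clean v t') => //.
  - by apply: (mem_subseq tI); rewrite inE eqxx.
  - exact: cons_subseq tI.
  - by move: st => /=; lia.
have [t2 [t2s [[st2 pt2]|[st2 pu2]]]] :=
  @ramsey _ (fun v w => bad w v) (2 * M0 + 1) L t (eq_leq (esym st)).
  case/lastP: t2 t2s st2 pt2 => [|t' w] t2s st2; first by move: st2 => /=; lia.
  rewrite pairwise_rcons => /andP[/allP pt2 _].
  have t2s' := subseq_trans t2s tI.
  apply: (clean w t') => //.
  - by apply: (mem_subseq t2s'); rewrite mem_rcons inE eqxx.
  - exact: subseq_trans (subseq_rcons _ _) t2s'.
  - by move: st2; rewrite size_rcons; lia.
set u := t2 in t2s st2 pu2.
have uI' := subseq_trans t2s tI.
have inu : {subset u <= I} := mem_subseq uI'.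
have uu : uniq u := subseq_uniq uI' uI.
have hu0 := sym2 uu (subseq_pairwise t2s pt) pu2.
have hu : {in u &, forall v w, v != w -> ~~ adj (a v) w && ~~ adj (b v) w}.
  by move=> v w vu wu nvw; have := hu0 v w vu wu nvw; rewrite /bad negb_or.
have ainj : {in u &, forall v w, v != w -> a v != a w}.
  move=> v w vu wu nvw; apply/eqP => e; have /andP[h _] := hu v w vu wu nvw.
  by move: h; rewrite e gsym av ?inu.
have binj : {in u &, forall v w, v != w -> b v != b w}.
  move=> v w vu wu nvw; apply/eqP => e; have /andP[_ h] := hu v w vu wu nvw.
  by move: h; rewrite e gsym bv ?inu.
have aadj : {in u &, forall v w, adj (a v) w = (v == w)}.
  move=> v w vu wu; case: (eqVneq v w) => [->|nvw]; first by rewrite gsym av ?inu.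
  by apply/negbTE; have /andP[] := hu v w vu wu nvw.
have badj : {in u &, forall v w, adj (b v) w = (v == w)}.
  move=> v w vu wu; case: (eqVneq v w) => [->|nvw]; first by rewrite gsym bv ?inu.
  by apply/negbTE; have /andP[] := hu v w vu wu nvw.
have [u1 [u1s [[su1 pu1]|[su1 pu1]]]] :=
  @ramsey _ (fun v w => adj (a v) (a w)) n L1 u (eq_leq (esym st2)).
  have uy := subseq_uniq u1s uu; have iny : {subset u1 <= u} := mem_subseq u1s.
  apply: (@Kstar_from a u1 uy su1).
  + by move=> v w /iny/inu vI /iny/inu wI; apply: ane.
  + by apply: sym_pairwise uy pu1 => v w; exact: gsym.
  + by move=> v w /iny vu /iny wu; apply: aadj.
  + by move=> v w /iny/inu vI /iny/inu wI; apply: hI.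
have uu1 := subseq_uniq u1s uu; have inu1 : {subset u1 <= u} := mem_subseq u1s.
have ha1 : {in u1 &, forall v w, v != w -> ~~ adj (a v) (a w)}.
  by apply: sym_pairwise uu1 pu1 => v w; rewrite gsym.
have [u2 [u2s [[su2 pu2']|[su2 pu2']]]] :=
  @ramsey _ (fun v w => adj (b v) (b w)) n L2 u1 (eq_leq (esym su1)).
  have uy := subseq_uniq u2s uu1; have iny : {subset u2 <= u} := fun x hx => inu1 x (mem_subseq u2s hx).
  apply: (@Kstar_from b u2 uy su2).
  + by move=> v w /iny/inu vI /iny/inu wI; apply: bne.
  + by apply: sym_pairwise uy pu2' => v w; exact: gsym.
  + by move=> v w /iny vu /iny wu; apply: badj.
  + by move=> v w /iny/inu vI /iny/inu wI; apply: hI.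
have uu2 := subseq_uniq u2s uu1.
have inu2 : {subset u2 <= u1} := mem_subseq u2s.
have hb2 : {in u2 &, forall v w, v != w -> ~~ adj (b v) (b w)}.
  by apply: sym_pairwise uu2 pu2' => v w; rewrite gsym.
have inu2u : {subset u2 <= u} := fun x hx => inu1 x (inu2 x hx).
have k2h : forall (f g : V -> V) v1 v2 t', v1 \in u2 -> v2 \in u2 -> v1 != v2 ->
    {subset t' <= u2} -> uniq t' -> size t' = n ->
    {in u2 &, forall v w, v != w -> f v != f w} -> ~~ adj (f v1) (f v2) ->
    {in u2 &, forall v w, v != w -> g v != g w} ->
    {in u2 &, forall v w, v != w -> ~~ adj (g v) (g w)} ->
    {in t', forall w, adj (f v1) (g w) && adj (f v2) (g w)} -> False.
  move=> f g v1 v2 t' v1u v2u n12 tu ut sz finj nf ginj gna hh.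
  have gi : {in t' &, injective g}.
    move=> v w vt wt e; case: (eqVneq v w) => // nvw.
    by move: (ginj v w (tu v vt) (tu w wt) nvw); rewrite e eqxx.
  apply: (@K2_from (f v1) (f v2) (map g t')).
  - by rewrite map_inj_in_uniq.
  - by rewrite size_map.
  - exact: finj.
  - exact: nf.
  - by move=> x /mapP [w wt ->]; apply: hh.
  - move=> x x' /mapP [w wt ->] /mapP [w' wt' ->].
    case: (eqVneq w w') => [->|nww]; first by rewrite girr.
    by apply: gna => //; apply: tu.
have ainj2 : {in u2 &, forall v w, v != w -> a v != a w}.
  by move=> v w /inu2u vu /inu2u wu; apply: ainj.
have binj2 : {in u2 &, forall v w, v != w -> b v != b w}.
  by move=> v w /inu2u vu /inu2u wu; apply: binj.
have ha2 : {in u2 &, forall v w, v != w -> ~~ adj (a v) (a w)}.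
  by move=> v w /inu2 vu /inu2 wu; apply: ha1.
have [u3 [u3s [[su3 pu3]|[su3 pu3]]]] :=
  @ramsey _ (fun v w => adj (a v) (b w)) (n+2) L3 u2 (eq_leq (esym su2)).
  case: u3 u3s su3 pu3 => [|v1 [|v2 t']] u3s su3; [by clear -su3; move: su3 => /=; lia|by clear -su3; move: su3 => /=; lia|].
  rewrite !pairwise_cons => /and3P[/allP p1 /allP p2 _].
  have ut := subseq_uniq u3s uu2.
  have intu : {subset [:: v1, v2 & t'] <= u2} := mem_subseq u3s.
  move: ut => /= /and3P[]; rewrite inE negb_or => /andP[n12 _] _ ut'.
  apply: (k2h a b v1 v2 t') => //; try by apply: intu; rewrite !inE eqxx ?orbT.
  - by move=> x xt; apply: intu; rewrite !inE xt ?orbT.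
  - by clear -su3; move: su3 => /=; lia.
  - by apply: ha2 => //; apply: intu; rewrite !inE eqxx ?orbT.
  - by move=> w wt; rewrite p1 ?p2 // inE wt orbT.
have uu3 := subseq_uniq u3s uu2.
have inu3 : {subset u3 <= u2} := mem_subseq u3s.
have [u4 [u4s [[su4 pu4]|[su4 pu4]]]] :=
  @ramsey _ (fun v w => adj (b v) (a w)) (n+2) n u3 (eq_leq (esym su3)).
  case: u4 u4s su4 pu4 => [|v1 [|v2 t']] u4s su4; [by clear -su4; move: su4 => /=; lia|by clear -su4; move: su4 => /=; lia|].
  rewrite !pairwise_cons => /and3P[/allP p1 /allP p2 _].
  have ut := subseq_uniq u4s uu3.
  have intu : {subset [:: v1, v2 & t'] <= u2} := fun x hx => inu3 x (mem_subseq u4s hx).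
  move: ut => /= /and3P[]; rewrite inE negb_or => /andP[n12 _] _ ut'.
  apply: (k2h b a v1 v2 t') => //; try by apply: intu; rewrite !inE eqxx ?orbT.
  - by move=> x xt; apply: intu; rewrite !inE xt ?orbT.
  - by clear -su4; move: su4 => /=; lia.
  - by apply: hb2 => //; apply: intu; rewrite !inE eqxx ?orbT.
  - by move=> w wt; rewrite p1 ?p2 // inE wt orbT.
have uu4 := subseq_uniq u4s uu3.
have inu4 : {subset u4 <= u2} := fun x hx => inu3 x (mem_subseq u4s hx).
have pe2 : pairwise (fun v w => ~~ adj (a v) (b w)) u4 := subseq_pairwise u4s pu3.
have pe3 : pairwise (fun v w => ~~ adj (a w) (b v)) u4.
  by apply: sub_pairwise pu4 => v w /=; rewrite gsym.
have hab := sym2 uu4 pe2 pe3.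
apply: (@nP3_from a b u4 uu4 su4).
- by move=> v /inu4/inu2u/inu vI; rewrite av ?bv.
- by move=> v /inu4/inu2u/inu vI; apply: nab.
- by move=> v /inu4/inu2u/inu vI; apply: neab.
- by move=> v w /inu4/inu2u/inu vI /inu4/inu2u/inu wI; apply: hI.
- by move=> v w /inu4/inu2u vu /inu4/inu2u wu; apply: hu.
- move=> v w vu wu nvw; rewrite hab // ha2 ?hb2 //; exact: inu4.
Qed.


Lemma bound_main : #|D| < R (R n n) B.
Proof.
rewrite ltnNge; apply/negP => h; rewrite cardE in h.
have [t [ts [[st pt]|[st pt]]]] := @ramsey _ adj (R n n) B (enum D) h.
- apply: (@clique_case t (subseq_uniq ts (enum_uniq _)) st).
  + by move=> v /(mem_subseq ts); rewrite mem_enum.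
  + exact: pt.
- apply: (@indep_case t (subseq_uniq ts (enum_uniq _)) st).
  + by move=> v /(mem_subseq ts); rewrite mem_enum.
  + exact: pt.
Qed.

End Main.


Lemma card_lb (G : graph) N (g : 'I_N -> 'I_(gn G)) : injective g ->
  (forall i, g i \in disc_vertices G) -> N <= #|disc_vertices G|.
Proof.
move=> gi gd; rewrite -{1}(card_ord N) -(card_imset _ gi).
by apply: subset_leq_card; apply/subsetP => x /imsetP [i _ ->].
Qed.

Lemma lb_Kstar N : 1 < N -> N <= #|disc_vertices (Kstar N)|.
Proof.
move=> hN.
have hv : forall i : 'I_N, i < gn (Kstar N) by move=> i /=; have := ltn_ord i; lia.
apply: (@card_lb _ N (fun i => Ordinal (hv i))).
  by move=> i j [] /val_inj.
move=> i.
have ha : i + N < gn (Kstar N) by rewrite /=; have := ltn_ord i; lia.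
have hb : (if val i == 0 then 1 else 0) < gn (Kstar N) by rewrite /=; case: ifP; lia.
apply: (@disc_intro _ _ (Ordinal ha) (Ordinal hb)); rewrite /= /mkrel /= -?val_eqE /=.
- have := ltn_ord i; lia.
- have := ltn_ord i; case: ifP; lia.
- case: ifP; lia.
- move=> y; have := ltn_ord y; have := ltn_ord i; rewrite /= /mkrel /= -?val_eqE /=; lia.
Qed.

Lemma lb_nP3 N : 1 < N -> N <= #|disc_vertices (nP3 N)|.
Proof.
move=> hN.
have hv : forall i : 'I_N, 3 * i + 1 < gn (nP3 N) by move=> i /=; have := ltn_ord i; lia.
apply: (@card_lb _ N (fun i => Ordinal (hv i))).
  by move=> i j /(congr1 val) /= e; apply: ord_inj; lia.
move=> i.
have ha : 3 * i < gn (nP3 N) by rewrite /=; have := ltn_ord i; lia.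
have hb : 3 * i + 2 < gn (nP3 N) by rewrite /=; have := ltn_ord i; lia.
apply: (@disc_intro _ _ (Ordinal ha) (Ordinal hb)); rewrite /= /mkrel /= -?val_eqE /=.
- have := ltn_ord i; lia.
- have := ltn_ord i; lia.
- lia.
- move=> y; have := ltn_ord y; have := ltn_ord i; rewrite /= /mkrel /= -?val_eqE /=; lia.
Qed.

Lemma lb_K1nstar N : 1 < N -> N <= #|disc_vertices (K1nstar N)|.
Proof.
move=> hN.
have hv : forall i : 'I_N, i + 1 < gn (K1nstar N) by move=> i /=; have := ltn_ord i; lia.
apply: (@card_lb _ N (fun i => Ordinal (hv i))).
  by move=> i j /(congr1 val) /= e; apply: ord_inj; lia.
move=> i.
have ha : i + 1 + N < gn (K1nstar N) by rewrite /=; have := ltn_ord i; lia.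
have hb : 0 < gn (K1nstar N) by rewrite /=; lia.
apply: (@disc_intro _ _ (Ordinal ha) (Ordinal hb)); rewrite /= /mkrel /= -?val_eqE /=.
- have := ltn_ord i; lia.
- have := ltn_ord i; lia.
- lia.
- move=> y; have := ltn_ord y; have := ltn_ord i; rewrite /= /mkrel /= -?val_eqE /=; lia.
Qed.

Lemma lb_K2n N : 1 < N -> N <= #|disc_vertices (K2n N)|.
Proof.
move=> hN.
have hv : forall i : 'I_N, i + 2 < gn (K2n N) by move=> i /=; have := ltn_ord i; lia.
apply: (@card_lb _ N (fun i => Ordinal (hv i))).
  by move=> i j /(congr1 val) /= e; apply: ord_inj; lia.
move=> i.
have ha : 0 < gn (K2n N) by rewrite /=; lia.
have hb : 1 < gn (K2n N) by rewrite /=; lia.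
apply: (@disc_intro _ _ (Ordinal ha) (Ordinal hb)); rewrite /= /mkrel /= -?val_eqE /=.
- have := ltn_ord i; lia.
- have := ltn_ord i; lia.
- lia.
- move=> y; have := ltn_ord y; have := ltn_ord i; rewrite /= /mkrel /= -?val_eqE /=; lia.
Qed.

Lemma lb_CK N : 1 < N -> N <= #|disc_vertices (CK N)|.
Proof.
move=> hN.
have hv : forall i : 'I_N, i < gn (CK N) by move=> i /=; have := ltn_ord i; lia.
apply: (@card_lb _ N (fun i => Ordinal (hv i))).
  by move=> i j [] /val_inj.
move=> i.
have ha : i + N < gn (CK N) by rewrite /=; have := ltn_ord i; lia.
have hb : (if val i == 0 then 1 else 0) < gn (CK N) by rewrite /=; case: ifP; lia.
apply: (@disc_intro _ _ (Ordinal ha) (Ordinal hb)); rewrite /= /mkrel /= -?val_eqE /=.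
- have := ltn_ord i; lia.
- have := ltn_ord i; case: ifP; lia.
- case: ifP; lia.
- move=> y; have := ltn_ord y; have := ltn_ord i; rewrite /= /mkrel /= -?val_eqE /=; lia.
Qed.

Lemma lb_Tn N : 1 < N -> N <= #|disc_vertices (Tn N)|.
Proof.
move=> hN.
have hv : forall i : 'I_N, N + i < gn (Tn N) by move=> i /=; have := ltn_ord i; lia.
apply: (@card_lb _ N (fun i => Ordinal (hv i))).
  by move=> i j /(congr1 val) /= e; apply: ord_inj; lia.
move=> i.
have ha : 2 * N < gn (Tn N) by rewrite /=; lia.
have hb : 0 < gn (Tn N) by rewrite /=; lia.
apply: (@disc_intro _ _ (Ordinal ha) (Ordinal hb)); rewrite /= /mkrel /= -?val_eqE /=.
- have := ltn_ord i; lia.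
- have := ltn_ord i; lia.
- lia.
- move=> y; have := ltn_ord y; have := ltn_ord i; rewrite /= /mkrel /= -?val_eqE /=; lia.
Qed.


Unset Implicit Arguments.

Theorem corollary1p10 (Hf : graph -> Prop) :
  (exists c : nat, forall G : graph, Hfree Hf G -> #|disc_vertices G| < c)
  <-> (exists n : nat, 0 < n /\ fam_le Hf (six_family n)).
Proof.
split.
- move=> [c hc]; exists (c + 2); split; first by lia.
  move=> H2 hH2.
  case: (classic (exists H1, Hf H1 /\ induced H1 H2)) => // hno; exfalso.
  have hf : Hfree Hf H2 by move=> H hH hind; apply: hno; exists H.
  have := hc H2 hf.
  have : c + 2 <= #|disc_vertices H2|.
    have h2 : 1 < c + 2 by lia.
    by case: hH2 => [->|[->|[->|[->|[->|->]]]]];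
      [apply: lb_Kstar|apply: lb_nP3|apply: lb_K1nstar|apply: lb_K2n|apply: lb_CK|apply: lb_Tn].
  lia.
- move=> [n [n0 hle]]; exists (R (R n n) (B n)) => G hG.
  have nind : forall F, six_family n F -> ~ induced F G.
    move=> F hF hind; have [H1 [hH1 hi]] := hle F hF.
    by apply: (hG H1 hH1); apply: induced_trans hi hind.
  apply: (bound_main n0).
  + by apply: nind; left.
  + by apply: nind; right; left.
  + by apply: nind; right; right; left.
  + by apply: nind; right; right; right; left.
  + by apply: nind; right; right; right; right; left.
Qed.
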